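(* Let $r\geq3$ be fixed and $\gamma_{n,r}=\sqrt{(r-2)(n-r+2)}$. For each sufficiently large $n$, let $G$ be an $n$-vertex $K_r$-minor free graph with maximum spread, and let $L$ be a set of $r-2$ vertices of $G$ such that every vertex of $L$ is adjacent to every vertex of $V(G)\setminus L$ and $V(G)\setminus L$ is independent (such a set exists for $n$ large). Let $A_L$ be the adjacency matrix of $G[L]$, $\ell_1=\mathbf 1^{\mathrm T}A_L\mathbf 1$ and $\ell_2=\mathbf 1^{\mathrm T}A_L^2\mathbf 1$. Then \[ s(G)=2\gamma_{n,r}+\frac{1}{r-2}\Big(-\frac{3}{4(r-2)}\ell_1^2+\ell_2\Big)\frac{1}{\gamma_{n,r}}+O\Big(\frac{1}{\gamma_{n,r}^3}\Big). \]
   Context: $s(G)=\lambda_1(G)-\lambda_n(G)$ is the spread (difference of largest and smallest adjacency eigenvalues). $\mathbf 1$ is the all-ones vector. Implicit constants depend only on $r$. *)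

(* Defs.v *)
From HB Require Import structures.
From mathcomp Require Import all_boot all_order all_algebra.
From mathcomp Require Import boolp classical_sets reals.
Set Implicit Arguments. Unset Strict Implicit. Unset Printing Implicit Defensive.
Import Order.TTheory GRing.Theory Num.Theory.
Local Open Scope ring_scope.


Definition simple_graph (n : nat) (e : rel 'I_n) : Prop :=
  (forall u v, e u v = e v u) /\ (forall u, ~~ e u u).

Definition connected_in (n : nat) (e : rel 'I_n) (B : {set 'I_n}) : Prop :=
  forall x y, x \in B -> y \in B ->
    connect (fun u v => [&& e u v, u \in B & v \in B]) x y.

Definition has_K_minor (r n : nat) (e : rel 'I_n) : Prop :=
  exists B : 'I_r -> {set 'I_n},
    [/\ forall i, B i != finset.set0,
        forall i, connected_in e (B i),
        forall i j, i != j -> [disjoint B i & B j] &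
        forall i j, i != j -> exists u v, [/\ u \in B i, v \in B j & e u v]].

Definition K_minor_free (r n : nat) (e : rel 'I_n) : Prop := ~ has_K_minor r e.

Definition adj_mx (R : realType) (n : nat) (e : rel 'I_n) : 'M[R]_n :=
  \matrix_(i, j) (e i j)%:R.

(* Largest and smallest (real) adjacency eigenvalues; the adjacency matrix is
   real symmetric, so all its eigenvalues are real. *)
Definition lambda_max (R : realType) (n : nat) (e : rel 'I_n) : R :=
  sup [set x : R | eigenvalue (adj_mx R e) x]%classic.
Definition lambda_min (R : realType) (n : nat) (e : rel 'I_n) : R :=
  inf [set x : R | eigenvalue (adj_mx R e) x]%classic.

Definition spread (R : realType) (n : nat) (e : rel 'I_n) : R :=
  lambda_max R e - lambda_min R e.

Definition max_spread_Kr_free (R : realType) (r n : nat) (e : rel 'I_n) : Prop :=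
  simple_graph e /\ K_minor_free r e /\
  forall e' : rel 'I_n, simple_graph e' -> K_minor_free r e' ->
    spread R e' <= spread R e.

Definition gamma_nr (R : realType) (n r : nat) : R :=
  Num.sqrt ((r%:R - 2) * (n%:R - r%:R + 2)).

Definition ell1 (R : realType) (n : nat) (e : rel 'I_n) (L : {set 'I_n}) : R :=
  \sum_(i in L) \sum_(j in L) (e i j)%:R.
Definition ell2 (R : realType) (n : nat) (e : rel 'I_n) (L : {set 'I_n}) : R :=
  \sum_(i in L) \sum_(j in L) \sum_(k in L) (e i k)%:R * (e k j)%:R.

(* Main.v *)
Require Import Defs.
From HB Require Import structures.
From mathcomp Require Import all_boot all_order all_algebra.
From mathcomp Require Import boolp classical_sets reals.
From mathcomp Require Import ring lra.
From mathcomp Require polyrcf.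
Import Order.TTheory GRing.Theory Num.Theory.
Local Open Scope ring_scope.

Module P1.
Set Implicit Arguments. Unset Strict Implicit. Unset Printing Implicit Defensive.

Lemma poly_bound (R : realType) (s : seq R) (h : R) : 0 <= h <= 1 ->
  `|\sum_(i < size s) s`_i * h^+i| <= \sum_(i < size s) `|s`_i|.
Proof.
move=> /andP[h0 h1]; apply: le_trans (ler_norm_sum _ _ _) _.
apply: ler_sum => i _; rewrite normrM normrX (ger0_norm h0).
by rewrite ler_piMr // exprn_ile1.
Qed.

Lemma lerNnormM (R : realType) (x y : R) : 0 <= y -> - (`|x| * y) <= x * y.
Proof. by move=> y0; have := lerNnormlW (lexx `|x*y|); rewrite normrM (ger0_norm y0). Qed.

Lemma lowb (R : realType) (b P M : R) : 0 <= P <= M -> - (`|b| * M) <= b * P.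
Proof.
move=> /andP[P0 PM]; apply: (le_trans _ (lerNnormM b P0)).
by rewrite lerN2 ler_wpM2l.
Qed.

Section Psi.
Variable R : realType.
Variables (k al be ga : R).
Hypothesis k0 : 0 < k.

Definition pb1 := 2*k*al.
Definition pb2 := 2*k*be + 3*k*al^+2.
Definition pb3 := 2*k*ga + 8*k*al*be + 4*k*al^+3.
Definition psi (g mu : R) :=
  mu^+2 - g^+2 - g^+2 / k * (pb1/mu + pb2/mu^+2 + pb3/mu^+3).
Definition acen (g : R) := g + al + be/g + ga/g^+2.

Definition Q4c : seq R :=
[:: (5*be^+2*k + 10*al*ga*k + 20*al^+2*be*k + 5*al^+4*k);
 (12*be*ga*k + 25*al*be^+2*k + 20*al^+2*ga*k + 20*al^+3*be*k + al^+5*k);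
 (7*ga^+2*k + 9*be^+3*k + 50*al*be*ga*k + 30*al^+2*be^+2*k + 20*al^+3*ga*k + 5*al^+4*be*k);
 (27*be^+2*ga*k + 25*al*ga^+2*k + 20*al*be^+3*k + 60*al^+2*be*ga*k + 10*al^+3*be^+2*k + 5*al^+4*ga*k);
 (27*be*ga^+2*k + 5*be^+4*k + 60*al*be^+2*ga*k + 30*al^+2*ga^+2*k + 10*al^+2*be^+3*k + 20*al^+3*be*ga*k);
 (9*ga^+3*k + 20*be^+3*ga*k + 60*al*be*ga^+2*k + 5*al*be^+4*k + 30*al^+2*be^+2*ga*k + 10*al^+3*ga^+2*k);
 (30*be^+2*ga^+2*k + be^+5*k + 20*al*ga^+3*k + 20*al*be^+3*ga*k + 30*al^+2*be*ga^+2*k);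
 (20*be*ga^+3*k + 5*be^+4*ga*k + 30*al*be^+2*ga^+2*k + 10*al^+2*ga^+3*k);
 (5*ga^+4*k + 10*be^+3*ga^+2*k + 20*al*be*ga^+3*k);
 (10*be^+2*ga^+3*k + 5*al*ga^+4*k);
 (5*be*ga^+4*k);
 (ga^+5*k)].

Definition Q4 (h : R) := \sum_(i < size Q4c) Q4c`_i * h^+i.

Lemma Q4E h :
  k * (1 + al*h + be*h^+2 + ga*h^+3)^+3 * ((1 + al*h + be*h^+2 + ga*h^+3)^+2 - 1)
  - h*pb1*(1 + al*h + be*h^+2 + ga*h^+3)^+2 - h^+2*pb2*(1 + al*h + be*h^+2 + ga*h^+3)
  - h^+3*pb3 = h^+4 * Q4 h.
Proof.
rewrite /Q4 /=. rewrite !big_ord_recl big_ord0 /=.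
rewrite /pb1 /pb2 /pb3 /bump /=. ring.
Qed.


Lemma psi_gw g w : g != 0 -> w != 0 ->
  psi g (g*w) = g^+2 * (k * w^+3 * (w^+2 - 1) - g^-1*pb1*w^+2
     - g^-1^+2*pb2*w - g^-1^+3*pb3) / (k * w^+3).
Proof.
move=> g0 w0; have kn : k != 0 by rewrite gt_eqF.
rewrite /psi; field; rewrite ?kn ?g0 ?w0 //.
Qed.

Lemma psi_center : exists D G, 1 <= G /\
  forall g, G <= g -> `|psi g (acen g)| <= D / g^+2.
Proof.
set S := `|al| + `|be| + `|ga|.
have S0 : 0 <= S by rewrite /S; have := normr_ge0 al; have := normr_ge0 be;
  have := normr_ge0 ga; lra.
exists (8 / k * \sum_(i < size Q4c) `|Q4c`_i|), (2*S + 1); split; first lra.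
move=> g Hg; have g1 : 1 <= g by lra.
have g0 : 0 < g by lra.
set h := g^-1.
have h0 : 0 < h by rewrite invr_gt0.
have h1 : h <= 1 by rewrite invr_le1 // ?unitfE ?gt_eqF.
have gh : g * h = 1 by rewrite mulfV // gt_eqF.
set w := 1 + al*h + be*h^+2 + ga*h^+3.
have Sh : S * h <= 1/2.
  have : S <= g / 2 by lra.
  move=> H; have := ler_wpM2r (ltW h0) H; nra.
have hh2 : h^+2 <= h by rewrite expr2 ler_piMl // ltW.
have hh3 : h^+3 <= h.
  by rewrite exprS; apply: ler_piMr; [exact: ltW | rewrite exprn_ile1 // ltW].
have w12 : 1/2 <= w.
  have e1 : - (`|al| * h) <= al * h.
      exact: lerNnormM (ltW h0).
  have e2 : - (`|be| * h) <= be * h^+2.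
    apply: le_trans (_ : - (`|be| * h^+2) <= _).
      by rewrite lerN2 ler_wpM2l.
    by apply: lerNnormM; rewrite exprn_ge0 // ltW.
  have e3 : - (`|ga| * h) <= ga * h^+3.
    apply: le_trans (_ : - (`|ga| * h^+3) <= _).
      by rewrite lerN2 ler_wpM2l.
    by apply: lerNnormM; rewrite exprn_ge0 // ltW.
  rewrite /w; move: Sh; rewrite /S; lra.
have w0 : 0 < w by lra.
have Ea : acen g = g * w.
  by rewrite /acen /w /h; field; rewrite gt_eqF.
have Ep : psi g (acen g) = h^+2 * Q4 h / (k * w^+3).
  rewrite Ea psi_gw ?gt_eqF // -/h Q4E -/w.
  congr (_ / _); rewrite mulrA; congr (_ * _).
  by rewrite (_ : 4 = 2 + 2)%N // exprD mulrA -exprMn gh expr1n mul1r.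
set D4 := \sum_(i < size Q4c) `|Q4c`_i|.
have Qb : `|Q4 h| <= D4 by apply: poly_bound; rewrite ltW.
have D40 : 0 <= D4 by apply: le_trans Qb.
have w3 : 1/8 <= w^+3 by rewrite !exprS expr0; nra.
have key : `|Q4 h| / (k * w^+3) <= 8/k * D4.
  rewrite ler_pdivrMr ?mulr_gt0 ?exprn_gt0 //.
  rewrite (_ : 8/k*D4*(k*w^+3) = 8*D4*w^+3); last by field; rewrite gt_eqF.
  nra.
rewrite Ep normrM normfV normrM (ger0_norm (exprn_ge0 _ (ltW h0))).
rewrite (gtr0_norm (mulr_gt0 k0 (exprn_gt0 _ w0))).
by rewrite -mulrA [X in _ <= X]mulrC /h exprVn ler_wpM2l // invr_ge0 exprn_ge0 // ltW.
Qed.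

Lemma psi_diff g u v : u != 0 -> v != 0 -> k != 0 ->
  psi g u - psi g v = (u - v) * (u + v + g^+2/k * (pb1/(u*v)
    + pb2*(u+v)/(u^+2*v^+2) + pb3*(u^+2+u*v+v^+2)/(u^+3*v^+3))).
Proof. by move=> u0 v0 kn; rewrite /psi; field; rewrite ?u0 ?v0 ?kn. Qed.

Lemma psi_mono : exists G, 1 <= G /\ forall g u v, G <= g -> g/2 <= v -> v <= u ->
  (u - v) * (g/2) <= psi g u - psi g v.
Proof.
set D1 := (4*`|pb1| + 16*`|pb2| + 48*`|pb3|)/k.
have N0 : 0 <= 4*`|pb1| + 16*`|pb2| + 48*`|pb3|.
  have := normr_ge0 pb1; have := normr_ge0 pb2; have := normr_ge0 pb3; lra.
have D10 : 0 <= D1 by rewrite /D1 divr_ge0 // ltW.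
exists (2*D1 + 1); split; first lra.
move=> g u v Hg Hv Huv.
have g0 : 0 < g by lra.
have v0 : 0 < v by lra.
have u0 : 0 < u by lra.
have kn : k != 0 by rewrite gt_eqF.
rewrite psi_diff ?gt_eqF //.
apply: ler_wpM2l; first lra.
set p := g / u; set q := g / v; set t := g^-1.
have p0 : 0 < p by rewrite divr_gt0.
have q0 : 0 < q by rewrite divr_gt0.
have p2 : p <= 2 by rewrite ler_pdivrMr //; lra.
have q2 : q <= 2 by rewrite ler_pdivrMr //; lra.
have t0 : 0 < t by rewrite invr_gt0.
have t1 : t <= 1 by rewrite invr_le1 // ?unitfE ?gt_eqF //; lra.
have E : g^+2/k * (pb1/(u*v) + pb2*(u+v)/(u^+2*v^+2) + pb3*(u^+2+u*v+v^+2)/(u^+3*v^+3))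
   = (pb1 * (p*q) + pb2 * (p*q*(p+q)*t) + pb3 * (p*q*(p^+2+p*q+q^+2)*t^+2)) / k.
  by rewrite /p /q /t; field; rewrite ?gt_eqF.
rewrite E.
have B1 : 0 <= p*q <= 4 by apply/andP; split; nra.
have B2 : 0 <= p*q*(p+q)*t <= 16.
  have m4 : p*q*(p+q) <= 16 by nra.
  have m0 : 0 <= p*q*(p+q) by exact: (mulr_ge0 (mulr_ge0 (ltW p0) (ltW q0)) (ltW (addr_gt0 p0 q0))).
  apply/andP; split; first by exact: mulr_ge0 m0 (ltW t0).
  by apply: le_trans m4; apply: ler_piMr.
have B3 : 0 <= p*q*(p^+2+p*q+q^+2)*t^+2 <= 48.
  have m4 : p*q*(p^+2+p*q+q^+2) <= 48 by nra.
  have s0 : 0 <= p^+2+p*q+q^+2 by nra.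
  have m0 : 0 <= p*q*(p^+2+p*q+q^+2) by exact: (mulr_ge0 (mulr_ge0 (ltW p0) (ltW q0)) s0).
  apply/andP; split; first by exact: mulr_ge0 m0 (exprn_ge0 _ (ltW t0)).
  apply: le_trans m4; apply: ler_piMr => //.
  by rewrite exprn_ile1 // ltW.
have L1 := lowb pb1 B1; have L2 := lowb pb2 B2; have L3 := lowb pb3 B3.
have XD : - D1 <= (pb1 * (p*q) + pb2 * (p*q*(p+q)*t) + pb3 * (p*q*(p^+2+p*q+q^+2)*t^+2)) / k.
  rewrite /D1 -mulNr ler_pM2r ?invr_gt0 //; lra.
lra.
Qed.

Lemma psi_loc K : 0 <= K -> exists c G, 0 < c /\ 1 <= G /\ forall g, G <= g ->
  [/\ g/2 <= acen g - c/g^+3,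
      K/g^+2 < psi g (acen g + c/g^+3),
      psi g (acen g - c/g^+3) < - (K/g^+2) &
      forall mu, g/2 <= mu -> psi g mu <= K/g^+2 -> mu < acen g + c/g^+3].
Proof.
move=> K0.
have [D [Gc [Gc1 HC]]] := psi_center.
have [Gm [Gm1 HM]] := psi_mono.
set S := `|al| + `|be| + `|ga|.
have S0 : 0 <= S by rewrite /S; have := normr_ge0 al; have := normr_ge0 be;
  have := normr_ge0 ga; lra.
set c := 2 * (K + `|D|) + 1.
have D0 := normr_ge0 D.
have c0 : 0 < c by rewrite /c; lra.
exists c, (Gc + Gm + 2 * (S + c) + 1); split => //; split; first lra.
move=> g Hg.
have g1 : 1 <= g by lra.
have g0 : 0 < g by lra.
set w := g^-1 ^+ 2.
have w0 : 0 < w by rewrite exprn_gt0 // invr_gt0.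
have gi1 : g^-1 <= 1 by rewrite invr_le1 // ?unitfE ?gt_eqF.
have gi0 : 0 <= g^-1 by rewrite invr_ge0 ltW.
have Ew : forall x, x / g^+2 = x * w by move=> x; rewrite /w exprVn.
rewrite !Ew.
set a := acen g; set t := c / g^+3.
have Et : t * (g/2) = (c/2) * w by rewrite /t /w; field; rewrite gt_eqF.
have t0 : 0 <= t by rewrite /t divr_ge0 ?exprn_ge0 // ltW.
have Hi : g/2 <= a - t.
  have e1 : - `|be| <= be / g.
    apply: le_trans (lerNnormM be gi0).
    by rewrite lerN2 ler_piMr.
  have e2 : - `|ga| <= ga / g^+2.
    rewrite -exprVn; apply: le_trans (lerNnormM ga (exprn_ge0 2 gi0)).
    by rewrite lerN2 ler_piMr // exprn_ile1.
  have e3 : t <= c.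
    rewrite /t ler_pdivrMr ?exprn_gt0 //; apply: ler_peMr; [exact: ltW | exact: exprn_ege1].
  have e4 : - `|al| <= al by rewrite lerNl -normrN ler_norm.
  have HS : S = `|al| + `|be| + `|ga| by [].
  rewrite /a /acen; lra.
have Ha : g/2 <= a by lra.
have Hc : `|psi g a| <= `|D| * w.
  apply: le_trans (HC g ltac:(lra)) _; rewrite Ew; apply: ler_wpM2r; [exact: ltW | exact: ler_norm].
have Hc' := Hc; rewrite ler_norml in Hc'; case/andP: Hc' => Hc1 Hc2.
have M1 := HM g (a + t) a ltac:(lra) Ha ltac:(lra).
have M2 := HM g a (a - t) ltac:(lra) Hi ltac:(lra).
have Eta : a + t - a = t by ring.
have Etb : a - (a - t) = t by ring.
rewrite Eta Et in M1; rewrite Etb Et in M2.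
have Kc : K * w + (`|D| * w) < (c/2) * w.
  by rewrite -mulrDl ltr_pM2r // /c; lra.
split.
- exact: Hi.
- lra.
- lra.
- move=> mu Hmu Hp; rewrite ltNge; apply/negP => Hle.
  have M3 := HM g mu (a + t) ltac:(lra) ltac:(lra) Hle.
  have : 0 <= (mu - (a + t)) * (g / 2) by apply: mulr_ge0; lra.
  lra.
Qed.

End Psi.

End P1.
Import P1.

Module P2.
Set Implicit Arguments. Unset Strict Implicit. Unset Printing Implicit Defensive.

Section Expand.
Variables (R : realType) (n : nat) (e : rel 'I_n) (L : {set 'I_n}).

Definition Tm (f : 'I_n -> R) : 'I_n -> R := fun j => \sum_(i in L) (e i j)%:R * f i.
Definition kk : R := #|L|%:R.
Definition ones : 'I_n -> R := fun _ => 1.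
Definition SL (f : 'I_n -> R) : R := \sum_(j in L) f j.
Definition l1 := SL (Tm ones).
Definition l2 := SL (Tm (Tm ones)).
Definition l3 := SL (Tm (Tm (Tm ones))).
Definition Sx (lam : R) := kk/lam + l1/lam^+2 + l2/lam^+3 + l3/lam^+4.

Lemma Tm_ext f f' : {in L, f =1 f'} -> Tm f =1 Tm f'.
Proof. by move=> H j; apply: eq_bigr => i iL; rewrite H. Qed.

Lemma Tm_lin (a b : R) f f' :
  Tm (fun i => a * f i + b * f' i) =1 (fun j => a * Tm f j + b * Tm f' j).
Proof.
move=> j; rewrite /Tm !mulr_sumr -big_split /=; apply: eq_bigr => i _; ring.
Qed.

Lemma SL_lin (a b : R) f f' :
  SL (fun i => a * f i + b * f' i) = a * SL f + b * SL f'.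
Proof. by rewrite /SL !mulr_sumr -big_split. Qed.

Lemma SL_ext f f' : {in L, f =1 f'} -> SL f = SL f'.
Proof. by move=> H; apply: eq_bigr => i iL; rewrite H. Qed.

Lemma SL_bound f B : (forall i, i \in L -> `|f i| <= B) -> `|SL f| <= kk * B.
Proof.
move=> H; rewrite /SL; apply: le_trans (ler_norm_sum _ _ _) _.
apply: le_trans (_ : _ <= \sum_(i in L) B) _; first exact: ler_sum.
by rewrite sumr_const mulr_natl.
Qed.

Lemma Tm_bound f B : (forall i, i \in L -> `|f i| <= B) -> forall j, `|Tm f j| <= kk * B.
Proof.
move=> H j; rewrite /Tm; apply: le_trans (ler_norm_sum _ _ _) _.
have H' : forall i, i \in L -> `|(e i j)%:R * f i| <= B.
  move=> i iL; rewrite normrM; case: (e i j); rewrite ?normr1 ?mul1r ?H //.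
  by rewrite normr0 mul0r; apply: le_trans (H i iL).
apply: le_trans (_ : _ <= \sum_(i in L) B) _; first exact: ler_sum.
by rewrite sumr_const mulr_natl.
Qed.

Lemma kk_ge0 : 0 <= kk. Proof. exact: ler0n. Qed.

Lemma expand_bound lam Y x : 0 < kk -> 2 * kk <= `|lam| ->
  (forall j, j \in L -> lam * x j = Tm x j + Y) ->
  forall j, j \in L -> `|x j| <= 2 * `|Y| / `|lam|.
Proof.
move=> k0 Hl Hx.
have l0 : 0 < `|lam| by lra.
set M := \big[Num.max/0]_(i in L) `|x i|.
have M0 : 0 <= M.
  have [i iL] : exists i, i \in L.
    by apply/set0Pn; rewrite -card_gt0 -(ltr0n R).
  apply: le_trans (normr_ge0 (x i)) _; exact: le_bigmax_cond.
have Mb : forall i, i \in L -> `|x i| <= M by move=> i iL; exact: le_bigmax_cond.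
have TB := Tm_bound Mb.
have HM : M <= (kk * M + `|Y|) / `|lam|.
  apply: bigmax_le; first by apply: divr_ge0; [have := normr_ge0 Y; nra | lra].
  move=> i iL; rewrite ler_pdivlMr //.
  rewrite mulrC -normrM Hx //; apply: le_trans (ler_normD _ _) _.
  by rewrite lerD2r.
have HM' : M * `|lam| <= kk * M + `|Y| by rewrite -ler_pdivlMr.
have HM2 : M <= 2 * `|Y| / `|lam|.
  rewrite ler_pdivlMr //; nra.
by move=> j jL; apply: le_trans (Mb j jL) HM2.
Qed.

Lemma SL_ones : SL ones = kk.
Proof. by rewrite /SL /ones sumr_const. Qed.

Lemma expand_sum lam Y x : 0 < kk -> 2 * kk <= `|lam| ->
  (forall j, j \in L -> lam * x j = Tm x j + Y) ->
  `|SL x - Y * Sx lam| <= 2 * kk^+5 * `|Y| / `|lam|^+5.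
Proof.
move=> k0 Hl Hx.
have l0 : 0 < `|lam| by lra.
have lam0 : lam != 0 by rewrite -normr_gt0.
have s0 : {in L, x =1 fun i => Y/lam * ones i + lam^-1 * Tm x i}.
  by move=> i iL; apply: (mulfI lam0); rewrite Hx // /ones; field.
have H1 : forall j, Tm x j = Y/lam * Tm ones j + lam^-1 * Tm (Tm x) j.
  by move=> j; rewrite (Tm_ext s0 j) Tm_lin.
have H2 : forall j, Tm (Tm x) j = Y/lam * Tm (Tm ones) j + lam^-1 * Tm (Tm (Tm x)) j.
  by move=> j; rewrite (@Tm_ext _ (fun i => Y/lam * Tm ones i + lam^-1 * Tm (Tm x) i) (fun i _ => H1 i) j) Tm_lin.
have H3 : forall j, Tm (Tm (Tm x)) j = Y/lam * Tm (Tm (Tm ones)) j + lam^-1 * Tm (Tm (Tm (Tm x))) j.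
  by move=> j; rewrite (@Tm_ext _ (fun i => Y/lam * Tm (Tm ones) i + lam^-1 * Tm (Tm (Tm x)) i) (fun i _ => H2 i) j) Tm_lin.
have S0 : SL x = Y/lam * kk + lam^-1 * SL (Tm x) by rewrite (SL_ext s0) SL_lin SL_ones.
have S1 : SL (Tm x) = Y/lam * l1 + lam^-1 * SL (Tm (Tm x)).
  by rewrite (@SL_ext _ _ (fun i _ => H1 i)) SL_lin.
have S2 : SL (Tm (Tm x)) = Y/lam * l2 + lam^-1 * SL (Tm (Tm (Tm x))).
  by rewrite (@SL_ext _ _ (fun i _ => H2 i)) SL_lin.
have S3 : SL (Tm (Tm (Tm x))) = Y/lam * l3 + lam^-1 * SL (Tm (Tm (Tm (Tm x)))).
  by rewrite (@SL_ext _ _ (fun i _ => H3 i)) SL_lin.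
have E : SL x - Y * Sx lam = SL (Tm (Tm (Tm (Tm x)))) / lam^+4.
  rewrite S0 S1 S2 S3 /Sx; field; exact: lam0.
rewrite E normrM normfV normrX.
set B := 2 * `|Y| / `|lam|.
have B0 := expand_bound k0 Hl Hx.
have T1 := Tm_bound B0.
have T2 := Tm_bound (fun i _ => T1 i).
have T3 := Tm_bound (fun i _ => T2 i).
have T4 := Tm_bound (fun i _ => T3 i).
have S4 := SL_bound (fun i _ => T4 i).
rewrite ler_pdivrMr ?exprn_gt0 //; apply: le_trans S4 _.
rewrite /B le_eqVlt; apply/orP; left; apply/eqP; field; rewrite gt_eqF //.
Qed.

End Expand.

End P2.
Import P2.

Module P3.
Set Implicit Arguments. Unset Strict Implicit. Unset Printing Implicit Defensive.

Section Spec.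
Variables (R : realType) (n : nat) (e : rel 'I_n) (L : {set 'I_n}).
Hypothesis hsym : forall u v, e u v = e v u.
Hypothesis hLo : forall u v, u \in L -> v \notin L -> e u v.
Hypothesis hoo : forall u v, u \notin L -> v \notin L -> ~~ e u v.

Local Notation A := (adj_mx R e).
Local Notation Tm := (Tm (R:=R) e L).
Local Notation SL := (SL (R:=R) L).
Local Notation kk := (kk R L).
Local Notation Sx := (Sx e L).
Definition mm : R := #|~: L|%:R.

Lemma rowA (v : 'rV[R]_n) j : (v *m A) 0 j = \sum_i v 0 i * (e i j)%:R.
Proof. by rewrite mxE; apply: eq_bigr => i _; rewrite mxE. Qed.

Lemma rowA_in (v : 'rV[R]_n) j : j \in L ->
  (v *m A) 0 j = Tm (fun i => v 0 i) j + \sum_(i in ~: L) v 0 i.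
Proof.
move=> jL; rewrite rowA (bigID (fun i => i \in L)) /=; congr (_ + _).
  by apply: eq_bigr => i _; rewrite mulrC.
apply: eq_big => [i|i]; first by rewrite !inE.
by move=> iL; rewrite hsym hLo // mulr1.
Qed.

Lemma rowA_out (v : 'rV[R]_n) j : j \notin L ->
  (v *m A) 0 j = SL (fun i => v 0 i).
Proof.
move=> jL; rewrite rowA (bigID (fun i => i \in L)) /=.
rewrite [X in _ + X]big1 ?addr0.
  by apply: eq_bigr => i iL; rewrite hLo // mulr1.
by move=> i iL; rewrite (negbTE (hoo iL jL)) mulr0.
Qed.

Lemma eig_eqs (v : 'rV[R]_n) lam : v *m A = lam *: v ->
  (forall j, j \in L -> lam * v 0 j = Tm (fun i => v 0 i) j + \sum_(i in ~: L) v 0 i) /\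
  (forall j, j \notin L -> lam * v 0 j = SL (fun i => v 0 i)).
Proof.
move=> Hv; split=> j jL.
  by rewrite -(rowA_in v jL) Hv mxE.
by rewrite -(rowA_out v jL) Hv mxE.
Qed.

Lemma eig_nec lam (v : 'rV[R]_n) : v *m A = lam *: v -> v != 0 -> 0 < kk ->
  2 * kk <= `|lam| ->
  `|lam^+2 - mm * lam * Sx lam| <= 2 * mm * kk^+5 / `|lam|^+4.
Proof.
move=> Hv vn0 k0 Hl.
have l0 : 0 < `|lam| by lra.
have lam0 : lam != 0 by rewrite -normr_gt0.
have [Hin Hout] := eig_eqs Hv.
set x := fun i => v 0 i.
set Y := \sum_(i in ~: L) x i.
set s := SL x.
have Hin' : forall j, j \in L -> lam * x j = Tm x j + Y by move=> j jL; exact: Hin.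
have Hout' : forall j, j \notin L -> lam * x j = s by move=> j jL; exact: Hout.
clear Hin Hout.
have lamY : lam * Y = mm * s.
  rewrite /Y mulr_sumr (eq_bigr (fun _ => s)); first by rewrite sumr_const mulr_natl.
  by move=> i; rewrite inE => iL; rewrite Hout'.
have Y0 : Y != 0.
  apply/negP => /eqP Y0; move/negP: vn0; apply; apply/eqP/rowP => j.
  have xL : forall i, i \in L -> x i = 0.
    move=> i iL; apply/normr0_eq0/eqP; rewrite eq_le normr_ge0 andbT.
    by have := expand_bound k0 Hl Hin' iL; rewrite Y0 normr0 mulr0 mul0r.
  have s0 : s = 0 by rewrite /s /SL big1.
  rewrite mxE; case: (boolP (j \in L)) => jL; first exact: xL.
  by apply/eqP; move: (Hout' j jL); rewrite -/s s0 => /eqP; rewrite mulf_eq0 (negbTE lam0).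
have ES := expand_sum k0 Hl Hin'.
have E : lam^+2 - mm * lam * Sx lam = lam * mm * (s - Y * Sx lam) / Y.
  have E1 : lam * mm * (s - Y * Sx lam) / Y = lam * (mm * s) / Y - mm * lam * Sx lam.
    by field.
  by rewrite E1 -lamY; field.
rewrite E normrM normfV !normrM (ger0_norm (ler0n _ _)).
have Yp : 0 < `|Y| by rewrite normr_gt0.
rewrite ler_pdivrMr //.
apply: le_trans (_ : `|lam| * mm * (2 * kk ^+ 5 * `|Y| / `|lam| ^+ 5) <= _).
  by rewrite ler_wpM2l // mulr_ge0 ?ler0n.
by rewrite le_eqVlt; apply/orP; left; apply/eqP; field; rewrite gt_eqF.
Qed.

Definition bL (i j : 'I_n) : bool := [&& i \in L, j \in L & e i j].
Definition Mp : 'M[{poly R}]_n := \matrix_(i, j) ((i == j)%:R * 'X - (bL i j)%:R).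
Definition Mlam (lam : R) : 'M[R]_n := \matrix_(i, j) ((i == j)%:R * lam - (bL i j)%:R).
Definition uL (T : nzRingType) : 'rV[T]_n := \row_i (i \in L)%:R.
Definition qlam lam := \det (Mlam lam).
Definition xl lam : 'rV[R]_n := uL R *m \adj (Mlam lam).
Definition sl lam := SL (fun j => xl lam 0 j).
Definition Plam lam := lam * qlam lam - mm * sl lam.
Definition qp := \det Mp.
Definition Pp := 'X * qp - mm%:P * \sum_(j in L) (uL _ *m \adj Mp) 0 j.

Lemma Mp_eval lam : map_mx (horner_eval lam) Mp = Mlam lam.
Proof.
apply/matrixP => i j; rewrite !mxE /horner_eval.
by rewrite !hornerE hornerMn hornerE [X in _ - X]hornerMn hornerE.
Qed.

Lemma uL_eval lam : map_mx (horner_eval lam) (uL _) = uL R.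
Proof. by apply/matrixP => i j; rewrite !mxE /horner_eval hornerMn hornerE. Qed.

Lemma qp_eval lam : qp.[lam] = qlam lam.
Proof. by rewrite /qlam -Mp_eval det_map_mx. Qed.

Lemma Pp_eval lam : Pp.[lam] = Plam lam.
Proof.
rewrite /Pp /Plam hornerD hornerN !hornerM hornerX hornerC qp_eval horner_sum.
congr (_ - _ * _); apply: eq_bigr => j _.
by rewrite /xl -(uL_eval lam) -(Mp_eval lam) -map_mx_adj -map_mxM [RHS]mxE.
Qed.

Lemma rowM (v : 'rV[R]_n) lam j :
  (v *m Mlam lam) 0 j = lam * v 0 j - (if j \in L then Tm (fun i => v 0 i) j else 0).
Proof.
rewrite mxE.
rewrite (eq_bigr (fun i => v 0 i * ((i == j)%:R * lam) - v 0 i * (bL i j)%:R));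
  last by move=> i _; rewrite mxE mulrBr.
rewrite sumrB; congr (_ - _).
  rewrite (bigD1 j) //= eqxx mul1r big1 ?addr0 1?mulrC // => i /negbTE ->.
  by rewrite mul0r mulr0.
case: ifP => jL.
  rewrite /Tm (bigID (fun i => i \in L)) /= [X in _ + X]big1 ?addr0.
    by apply: eq_bigr => i iL; rewrite /bL iL jL /= mulrC.
  by move=> i /negbTE iL; rewrite /bL iL /= mulr0.
by apply: big1 => i _; rewrite /bL jL andbF /= mulr0.
Qed.

Lemma xl_eq lam : xl lam *m Mlam lam = qlam lam *: uL R.
Proof. by rewrite /xl -mulmxA mul_adj_mx mul_mx_scalar. Qed.

Lemma xl_in lam j : j \in L -> lam * xl lam 0 j = Tm (fun i => xl lam 0 i) j + qlam lam.
Proof.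
move=> jL; have := congr1 (fun M : 'rV[R]_n => M 0 j) (xl_eq lam).
rewrite rowM jL !mxE jL mulr1 => H; rewrite -H; ring.
Qed.

Lemma xl_out lam j : j \notin L -> lam * xl lam 0 j = 0.
Proof.
move=> jL; have := congr1 (fun M : 'rV[R]_n => M 0 j) (xl_eq lam).
by rewrite rowM (negbTE jL) !mxE (negbTE jL) mulr0 subr0.
Qed.

Lemma q_nz lam : 0 < kk -> 2 * kk <= `|lam| -> qlam lam != 0.
Proof.
move=> k0 Hl; apply/negP => /det0P [v vn0 vM].
have l0 : 0 < `|lam| by lra.
have lam0 : lam != 0 by rewrite -normr_gt0.
have Hr : forall j, (v *m Mlam lam) 0 j = 0 by move=> j; rewrite vM mxE.
have Hin : forall j, j \in L -> lam * v 0 j = Tm (fun i => v 0 i) j + 0.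
  by move=> j jL; move: (Hr j); rewrite rowM jL addr0 => /eqP; rewrite subr_eq0 => /eqP.
move/negP: vn0; apply; apply/eqP/rowP => j; rewrite mxE.
case: (boolP (j \in L)) => jL.
  apply/normr0_eq0/eqP; rewrite eq_le normr_ge0 andbT.
  by have := expand_bound k0 Hl Hin jL; rewrite normr0 mulr0 mul0r.
by move: (Hr j); rewrite rowM (negbTE jL) subr0 => /eqP; rewrite mulf_eq0 (negbTE lam0) => /eqP.
Qed.

Lemma Tm_scale a f j : Tm (fun i => a * f i) j = a * Tm f j.
Proof. rewrite /P2.Tm mulr_sumr; apply: eq_bigr => i _; ring. Qed.

Lemma SL_scale a f : SL (fun i => a * f i) = a * SL f.
Proof. by rewrite /P2.SL mulr_sumr. Qed.

Lemma eig_suff lam : lam != 0 -> qlam lam != 0 -> 0 < kk -> Plam lam = 0 ->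
  eigenvalue A lam.
Proof.
move=> lam0 q0 k0 P0.
set x := fun i => xl lam 0 i.
have Hin : forall j, j \in L -> lam * x j = Tm x j + qlam lam by move=> j jL; exact: xl_in.
have Hout : forall j, j \notin L -> x j = 0.
  by move=> j jL; have /eqP := xl_out lam jL; rewrite mulf_eq0 (negbTE lam0) => /eqP.
set s := sl lam.
have Es : s = SL x by [].
have ms : mm * s = lam * qlam lam by move: P0; rewrite /Plam -/s => /eqP; rewrite subr_eq0 => /eqP.
set v : 'rV[R]_n := \row_j (if j \in L then lam * x j else s).
have vL : forall i, i \in L -> v 0 i = lam * x i by move=> i iL; rewrite mxE iL.
apply/eigenvalueP; exists v.
  apply/rowP => j; rewrite [RHS]mxE; case: (boolP (j \in L)) => jL.
    have TE : Tm (fun i => v 0 i) j = Tm (fun i => lam * x i) j by apply: Tm_ext => i iL; exact: vL.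
    rewrite (rowA_in v jL) TE.
    rewrite Tm_scale (eq_bigr (fun _ => s)); last by move=> i; rewrite inE mxE => /negbTE ->.
    rewrite sumr_const -mulr_natl -/mm ms vL // mulrA -expr2 -[lam^+2]/(lam * lam) -mulrA Hin //.
    ring.
  have SE : SL (fun i => v 0 i) = SL (fun i => lam * x i) by apply: SL_ext => i iL; exact: vL.
  rewrite (rowA_out v jL) SE.
  by rewrite SL_scale mxE (negbTE jL).
apply/negP => /eqP v0.
have [j0 j0L] : exists j, j \in L.
  by apply/set0Pn; rewrite -card_gt0 -(ltr0n R).
have x0 : forall i, i \in L -> x i = 0.
  move=> i iL; have := vL i iL; rewrite v0 mxE => /esym /eqP.
  by rewrite mulf_eq0 (negbTE lam0) => /eqP.
have T0 : Tm x j0 = 0.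
  by rewrite /P2.Tm big1 // => i iL; rewrite x0 ?mulr0.
move: (Hin j0 j0L); rewrite x0 // T0 mulr0 add0r => /esym /eqP.
by rewrite (negbTE q0).
Qed.

Lemma P_over_q lam : 0 < kk -> 2 * kk <= `|lam| ->
  `|lam * (Plam lam / qlam lam) - (lam^+2 - mm * lam * Sx lam)| <= 2 * mm * kk^+5 / `|lam|^+4.
Proof.
move=> k0 Hl.
have l0 : 0 < `|lam| by lra.
have lam0 : lam != 0 by rewrite -normr_gt0.
have q0 := q_nz k0 Hl.
have Hin : forall j, j \in L -> lam * (fun i => xl lam 0 i) j = Tm (fun i => xl lam 0 i) j + qlam lam.
  by move=> j jL; exact: xl_in.
have ES := expand_sum k0 Hl Hin.
have E : lam * (Plam lam / qlam lam) - (lam^+2 - mm * lam * Sx lam)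
   = - (lam * mm * (sl lam - qlam lam * Sx lam) / qlam lam).
  by rewrite /Plam; field.
rewrite E normrN normrM normfV !normrM (ger0_norm (ler0n _ _)).
have Yp : 0 < `|qlam lam| by rewrite normr_gt0.
rewrite ler_pdivrMr //.
apply: le_trans (_ : `|lam| * mm * (2 * kk ^+ 5 * `|qlam lam| / `|lam| ^+ 5) <= _).
  by rewrite ler_wpM2l // mulr_ge0 ?ler0n.
by rewrite le_eqVlt; apply/orP; left; apply/eqP; field; rewrite gt_eqF.
Qed.

Lemma eig_exists lam1 lam2 : lam1 <= lam2 -> 0 < kk ->
  (forall lam, lam1 <= lam <= lam2 -> 2 * kk <= `|lam|) ->
  (Plam lam1 / qlam lam1) * (Plam lam2 / qlam lam2) < 0 ->
  exists2 lam0, lam1 <= lam0 <= lam2 & eigenvalue A lam0.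
Proof.
move=> le12 k0 Hr Hs.
have H1 := Hr lam1 ltac:(rewrite lexx le12 //).
have H2 := Hr lam2 ltac:(rewrite lexx le12 //).
have q1 := q_nz k0 H1; have q2 := q_nz k0 H2.
have qq : 0 < qlam lam1 * qlam lam2.
  rewrite ltNge; apply/negP => H.
  have [x xin rx] := @polyrcf.poly_ivt R qp lam1 lam2 le12 ltac:(by rewrite !qp_eval).
  rewrite in_itv /= in xin.
  have := q_nz k0 (Hr x xin); move: rx; rewrite /root qp_eval => ->; done.
have PP : Pp.[lam1] * Pp.[lam2] <= 0.
  rewrite !Pp_eval.
  have E : Plam lam1 * Plam lam2 = (Plam lam1 / qlam lam1 * (Plam lam2 / qlam lam2)) * (qlam lam1 * qlam lam2).
    by field; rewrite q1 q2.
  rewrite E; nra.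
have [x xin rx] := @polyrcf.poly_ivt R Pp lam1 lam2 le12 PP.
rewrite in_itv /= in xin.
exists x => //.
have Hx := Hr x xin.
have x0 : x != 0 by rewrite -normr_gt0; lra.
apply: eig_suff => //; first exact: q_nz.
by move: rx; rewrite /root Pp_eval => /eqP.
Qed.

End Spec.

End P3.
Import P3.

Module P4.
Set Implicit Arguments. Unset Strict Implicit. Unset Printing Implicit Defensive.

Section Side.
Variables (R : realType) (n : nat) (e : rel 'I_n) (L : {set 'I_n}).
Hypothesis hsym : forall u v, e u v = e v u.
Hypothesis hLo : forall u v, u \in L -> v \notin L -> e u v.
Hypothesis hoo : forall u v, u \notin L -> v \notin L -> ~~ e u v.

Local Notation A := (adj_mx R e).
Local Notation kk := (kk R L).
Local Notation mm := (mm R L).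
Local Notation Sx := (Sx e L).
Definition phi (lam : R) := lam^+2 - mm * lam * Sx lam.

Variables (g s al be ga c : R).
Hypothesis hs : s = 1 \/ s = -1.
Hypothesis k0 : 0 < kk.
Hypothesis g4 : 4 * kk <= g.
Hypothesis hgm : g^+2 = kk * mm.
Hypothesis Hphi : forall mu : R, mu != 0 -> phi (s * mu) = psi kk al be ga g mu.
Local Notation K := (32 * kk^+4).
Local Notation a := (acen al be ga g).
Hypothesis HL : [/\ g/2 <= a - c/g^+3,
      K/g^+2 < psi kk al be ga g (a + c/g^+3),
      psi kk al be ga g (a - c/g^+3) < - (K/g^+2) &
      forall mu, g/2 <= mu -> psi kk al be ga g mu <= K/g^+2 -> mu < a + c/g^+3].

Lemma g0 : 0 < g. Proof using k0 g4. have k0' := k0; have g4' := g4; lra. Qed.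

Lemma errb (lam : R) : g/2 <= `|lam| -> 2 * mm * kk^+5 / `|lam|^+4 <= K/g^+2.
Proof using k0 g4 hgm.
move=> Hl.
have gp := g0.
have l0 : 0 < `|lam| by lra.
have mm0 : 0 <= mm by exact: ler0n.
have mmp : 0 < mm.
  have : 0 < kk * mm by rewrite -hgm exprn_gt0.
  by rewrite pmulr_rgt0.
have l4 : g^+4 / 16 <= `|lam|^+4.
  have : (g/2)^+4 <= `|lam|^+4 by rewrite lerXn2r // ?nnegrE; lra.
  by rewrite expr_div_n (_ : 2^+4 = 16) //; ring.
rewrite ler_pdivrMr ?exprn_gt0 //.
rewrite (_ : K / g^+2 * `|lam|^+4 = 32 * kk^+4 * (`|lam|^+4 / g^+2)); last by field; rewrite gt_eqF.
have E : 2 * mm * kk^+5 = 32 * kk^+4 * ((g^+4 / 16) / g^+2).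
  rewrite (_ : g^+4 = g^+2 * g^+2); last by ring.
  by rewrite hgm; field; rewrite !gt_eqF.
rewrite E; apply: ler_wpM2l; first by rewrite mulr_ge0 // exprn_ge0 // ltW.
by apply: ler_wpM2r => //; rewrite invr_ge0 exprn_ge0 // ltW.
Qed.

Hypothesis c0 : 0 < c.

Lemma s2 : s * s = 1. Proof using hs. by case: hs => ->; rewrite ?mulr1 ?mulrNN ?mulr1. Qed.
Lemma ns (y : R) : `|s * y| = `|y|.
Proof using hs. by case: hs => ->; rewrite ?mul1r ?mulN1r ?normrN. Qed.

Lemma t0 : 0 <= c / g^+3.
Proof using k0 g4 c0. by rewrite divr_ge0 ?exprn_ge0 // ltW // g0. Qed.

Lemma side_up (x : R) : eigenvalue A x -> s * x < a + c/g^+3.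
Proof using All.
move=> /eigenvalueP [v Hv vn0].
have gp := g0; have tp := t0.
case: HL => H1 H2 H3 H4.
case: (ltP (s*x) (g/2)) => H; first lra.
have Hx : g/2 <= `|x| by rewrite -ns; apply: le_trans H (ler_norm _).
have k0' := k0; have g4' := g4.
have Hk : 2 * kk <= `|x| by lra.
have EN := eig_nec hsym hLo hoo Hv vn0 k0 Hk.
have EB := errb Hx.
have sx0 : s * x != 0 by rewrite -normr_gt0 ns; lra.
have Ex : x = s * (s * x) by rewrite mulrA s2 mul1r.
have Ep : phi x = psi kk al be ga g (s * x) by rewrite {1}Ex Hphi.
apply: H4 => //.
rewrite -Ep; apply: le_trans (ler_norm _) _; apply: le_trans EB.
exact: EN.
Qed.

Lemma sgn_at (mu : R) : g/2 <= mu -> 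
  `|s * mu * (Plam e L (s * mu) / qlam e L (s * mu)) - psi kk al be ga g mu| <= K / g^+2.
Proof using All.
move=> Hm.
have gp := g0; have k0' := k0; have g4' := g4.
have Hx : g/2 <= `|s * mu| by rewrite ns; apply: le_trans Hm (ler_norm _).
have Hk : 2 * kk <= `|s * mu| by lra.
have m0 : mu != 0 by rewrite gt_eqF //; lra.
rewrite -Hphi //; apply: le_trans (P_over_q e k0 Hk) _.
exact: errb.
Qed.

Lemma side_ex : exists2 x0, eigenvalue A x0 & `|s * x0 - a| <= c/g^+3.
Proof using All.
have gp := g0; have tp := t0.
case: HL => H1 H2 H3 H4.
set t := c / g^+3 in tp H1 H2 H3 H4 *.
set lam1 := s * (a - t); set lam2 := s * (a + t).
have k0' := k0; have g4' := g4.
have att : a - t <= a + t by lra.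
have S1 := sgn_at H1.
have S2 := sgn_at (le_trans H1 att).
rewrite -/lam1 in S1; rewrite -/lam2 in S2.
set X1 := Plam e L lam1 / qlam e L lam1 in S1 *.
set X2 := Plam e L lam2 / qlam e L lam2 in S2 *.
have u1 : lam1 * X1 < 0.
  move: S1; rewrite ler_norml => /andP [S1a S1b]; lra.
have u2 : 0 < lam2 * X2.
  move: S2; rewrite ler_norml => /andP [S2a S2b]; lra.
have P12 : lam1 * lam2 * (X1 * X2) < 0.
  rewrite (_ : lam1*lam2*(X1*X2) = (lam1*X1)*(lam2*X2)); [nra | ring].
have L12 : 0 < lam1 * lam2.
  rewrite /lam1 /lam2 mulrACA s2 mul1r; apply: mulr_gt0; lra.
rewrite pmulr_rlt0 // in P12.
case: hs => hs'.
  have E1 : lam1 = a - t by rewrite /lam1 hs' mul1r.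
  have E2 : lam2 = a + t by rewrite /lam2 hs' mul1r.
  have le12 : lam1 <= lam2 by rewrite E1 E2.
  have Hr : forall lam, lam1 <= lam <= lam2 -> 2 * kk <= `|lam|.
    move=> lam /andP [h1 h2]; rewrite ger0_norm; lra.
  have [x0 /andP [x1 x2] Ex] := eig_exists hsym hLo hoo le12 k0 Hr P12.
  exists x0 => //; rewrite hs' mul1r ler_norml; apply/andP; split; lra.
have E1 : lam1 = - (a - t) by rewrite /lam1 hs' mulN1r.
have E2 : lam2 = - (a + t) by rewrite /lam2 hs' mulN1r.
have le12 : lam2 <= lam1 by rewrite E1 E2 lerN2.
have Hr : forall lam, lam2 <= lam <= lam1 -> 2 * kk <= `|lam|.
  move=> lam /andP [h1 h2]; rewrite ler0_norm; lra.
rewrite mulrC in P12.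
have [x0 /andP [x1 x2] Ex] := eig_exists hsym hLo hoo le12 k0 Hr P12.
exists x0 => //; rewrite hs' mulN1r ler_norml; apply/andP; split; lra.
Qed.

End Side.

End P4.
Import P4.

Module P5.
Set Implicit Arguments. Unset Strict Implicit. Unset Printing Implicit Defensive.

Lemma ell1E (R : realType) n (e : rel 'I_n) L : ell1 R e L = l1 R e L.
Proof.
rewrite /ell1 /l1 /P2.SL /P2.Tm /ones exchange_big /=.
by apply: eq_bigr => i _; apply: eq_bigr => j _; rewrite mulr1.
Qed.

Lemma ell2E (R : realType) n (e : rel 'I_n) L : ell2 R e L = l2 R e L.
Proof.
rewrite /ell2 /l2 /P2.SL /P2.Tm /ones.
transitivity (\sum_(m in L) \sum_(j in L) \sum_(i in L) (e i j)%:R * (e m i)%:R :> R).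
  by apply: eq_bigr => m _; apply: eq_bigr => j _; apply: eq_bigr => i _; rewrite mulrC.
rewrite exchange_big /=; apply: eq_bigr => j _.
rewrite exchange_big /=; apply: eq_bigr => i _.
by rewrite mulr_sumr; apply: eq_bigr => m _; rewrite mulr1.
Qed.

Lemma mmE (R : realType) n (L : {set 'I_n}) : mm R L = (n - #|L|)%:R.
Proof.
rewrite /mm; have := cardsC L; rewrite card_ord => H.
have Hle : (#|L| <= n)%N by have := leq_addr #|~: L| #|L|; rewrite H.
by apply/eqP; rewrite eqr_nat -(eqn_add2l #|L|) H subnKC.
Qed.

Definition Qprop (R : realType) (r : nat) (a1 a2 a3 : R) (C : R) (N : nat) : Prop :=
  forall n : nat, (N <= n)%N ->
  forall e : rel 'I_n, max_spread_Kr_free R r e ->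
  forall L : {set 'I_n}, #|L| = (r - 2)%N ->
    (forall u v, u \in L -> v \notin L -> e u v) ->
    (forall u v, u \notin L -> v \notin L -> ~~ e u v) ->
    l1 R e L = a1 -> l2 R e L = a2 -> l3 R e L = a3 ->
    let g := gamma_nr R n r in
    `| spread R e
       - (2 * g + (r%:R - 2)^-1 *
            (- 3 / (4 * (r%:R - 2)) * (ell1 R e L) ^+ 2 + ell2 R e L) / g) |
      <= C / g ^+ 3.

Lemma per_triple (R : realType) (r : nat) (hr : (3 <= r)%N) (a1 a2 a3 : R) :
  exists C N, Qprop r a1 a2 a3 C N.
Proof.
set k := (r - 2)%N.
have k1 : (1 <= k)%N by rewrite /k subn_gt0.
set kR : R := k%:R.
have kR1 : 1 <= kR by rewrite /kR ler1n.
have kR0 : 0 < kR by lra.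
have rk : r%:R - 2 = kR :> R by rewrite /kR /k natrB // (leq_trans _ hr).
set al := a1 / (2*kR).
set be := (a2 - 3*kR*al^+2)/(2*kR).
set ga := (a3 - 8*kR*al*be - 4*kR*al^+3)/(2*kR).
set K := 32 * kR^+4.
have K0 : 0 <= K by rewrite /K mulr_ge0 // exprn_ge0 // ltW.
have [c1 [G1 [c10 [G11 HL1]]]] := @psi_loc R kR al be ga kR0 K K0.
have [c2 [G2 [c20 [G21 HL2]]]] := @psi_loc R kR (-al) be (-ga) kR0 K K0.
set G := G1 + G2 + 4 * kR.
have G0 : 0 <= G by rewrite /G; lra.
set n0 := (Num.truncn (G^+2)).+1.
have Hn0 : G^+2 < n0%:R by exact: truncnS_gt.
exists (c1 + c2), (k + n0)%N.
rewrite /Qprop; move=> n Hn e [[hsym hirr] _] L HL hLo hoo Hl1 Hl2 Hl3 /=.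
set g := gamma_nr R n r.
have kkE : kk R L = kR by rewrite /kk HL.
have hkn : (k + n0 <= n)%N := Hn.
have mmE2 : mm R L = n%:R - kR.
  by rewrite mmE HL natrB // -/k (leq_trans (leq_addr _ _) hkn).
have mmn0 : n0%:R <= mm R L.
  rewrite mmE HL ler_nat -/k leq_subRL //.
  exact: (leq_trans (leq_addr _ _) hkn).
have mm0 : 0 <= mm R L by rewrite /mm ler0n.
have gE : g = Num.sqrt (kR * mm R L).
  by rewrite /g /gamma_nr; congr (Num.sqrt _); rewrite mmE2 -rk; ring.
have hg2 : g^+2 = kk R L * mm R L.
  by rewrite gE sqr_sqrtr ?kkE // mulr_ge0 // ltW.
have gG : G <= g.
  rewrite gE -(ger0_norm G0) -sqrtr_sqr ler_sqrt; last by rewrite mulr_ge0 // ltW.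
  have : G^+2 <= mm R L by lra.
  move=> H; apply: le_trans H _; rewrite ler_peMl //.
have gp : 0 < g by rewrite /G in gG; lra.
have k0 : 0 < kk R L by rewrite kkE.
have g4 : 4 * kk R L <= g by rewrite kkE; rewrite /G in gG; lra.
have hsp : (1:R) = 1 \/ (1:R) = -1 by left.
have hsn : (-1:R) = 1 \/ (-1:R) = -1 by right.
have kRn : kR != 0 by rewrite gt_eqF.
have Hphi1 : forall mu : R, mu != 0 -> phi e L (1 * mu) = psi (kk R L) al be ga g mu.
  move=> mu mu0; rewrite mul1r /phi /psi /Sx hg2 kkE Hl1 Hl2 Hl3 /pb1 /pb2 /pb3 /ga /be /al.
  by field; rewrite mu0 kRn.
have Hphi2 : forall mu : R, mu != 0 -> phi e L (-1 * mu) = psi (kk R L) (-al) be (-ga) g mu.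
  move=> mu mu0; rewrite mulN1r /phi /psi /Sx hg2 kkE Hl1 Hl2 Hl3 /pb1 /pb2 /pb3 /ga /be /al.
  by field; rewrite mu0 kRn.
have gG1 : G1 <= g by rewrite /G in gG; lra.
have gG2 : G2 <= g by rewrite /G in gG; lra.
have HL1' := HL1 g gG1.
have HL2' := HL2 g gG2.
set A := adj_mx R e.
have U1 : forall x, eigenvalue A x -> 1 * x < acen al be ga g + c1/g^+3.
  move=> x Hx; apply: (side_up hsym hLo hoo hsp k0 g4 hg2 Hphi1 _ c10 Hx).
  by rewrite kkE; exact: HL1'.
have U2 : forall x, eigenvalue A x -> -1 * x < acen (-al) be (-ga) g + c2/g^+3.
  move=> x Hx; apply: (side_up hsym hLo hoo hsn k0 g4 hg2 Hphi2 _ c20 Hx).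
  by rewrite kkE; exact: HL2'.
have [x1 E1 B1] : exists2 x0, eigenvalue A x0 & `|1 * x0 - acen al be ga g| <= c1/g^+3.
  apply: (side_ex hsym hLo hoo hsp k0 g4 hg2 Hphi1 _ c10).
  by rewrite kkE; exact: HL1'.
have [x2 E2 B2] : exists2 x0, eigenvalue A x0 & `|-1 * x0 - acen (-al) be (-ga) g| <= c2/g^+3.
  apply: (side_ex hsym hLo hoo hsn k0 g4 hg2 Hphi2 _ c20).
  by rewrite kkE; exact: HL2'.
set S := [set x : R | eigenvalue A x]%classic.
set ap := acen al be ga g; set an := acen (-al) be (-ga) g.
set t1 := c1 / g^+3 in U1 B1 *; set t2 := c2 / g^+3 in U2 B2 *.
have ub : ubound S (ap + t1).
  by move=> y Sy; have := U1 y Sy; rewrite mul1r => /ltW.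
have lb : lbound S (- (an + t2)).
  by move=> y Sy; have := U2 y Sy; rewrite mulN1r lerNl => /ltW.
have ne : (S !=set0)%classic by exists x1.
have sup1 : lambda_max R e <= ap + t1 by exact: ge_sup.
have sup2 : x1 <= lambda_max R e.
  by apply: (sup_upper_bound (conj ne (ex_intro _ _ ub))).
have inf1 : - (an + t2) <= lambda_min R e by exact: lb_le_inf.
have inf2 : lambda_min R e <= x2.
  by apply: (ge_inf (ex_intro _ _ lb)).
have Tg : 2 * g + (r%:R - 2)^-1 * (-3 / (4 * (r%:R - 2)) * ell1 R e L ^+ 2 + ell2 R e L) / g
   = ap + an.
  rewrite rk ell1E ell2E Hl1 Hl2 /ap /an /acen /be /al; field.
  by rewrite kRn gt_eqF.
rewrite Tg /spread.
have ct : (c1 + c2) / g^+3 = t1 + t2 by rewrite /t1 /t2 mulrDl.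
rewrite ct.
move: B1 B2; rewrite mul1r mulN1r !ler_norml => /andP [B1a B1b] /andP [B2a B2b].
have hap : ap = acen al be ga g by [].
have han : an = acen (-al) be (-ga) g by [].
apply/andP; split; lra.
Qed.

Lemma unif (R : realType) (P : nat -> R -> nat -> Prop) (B : nat) :
  (forall i C C' N N', C <= C' -> (N <= N')%N -> P i C N -> P i C' N') ->
  (forall i, (i <= B)%N -> exists C N, P i C N) ->
  exists C N, forall i, (i <= B)%N -> P i C N.
Proof.
move=> Hm; elim: B => [|B IH] H.
  have [C [N HP]] := H 0%N (leqnn 0).
  by exists C, N => i; rewrite leqn0 => /eqP ->.
have [C1 [N1 H1]] := IH (fun i hi => H i (leq_trans hi (leqnSn B))).
have [C2 [N2 H2]] := H B.+1 (leqnn _).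
exists (Num.max C1 C2), (maxn N1 N2) => i; rewrite leq_eqVlt => /orP [/eqP -> | hi].
  by apply: Hm H2; rewrite ?le_max ?lexx ?orbT // leq_maxr.
by apply: Hm (H1 i hi); rewrite ?le_max ?lexx // leq_maxl.
Qed.

Lemma Qmono (R : realType) r (a1 a2 a3 : R) C C' N N' :
  C <= C' -> (N <= N')%N -> Qprop r a1 a2 a3 C N -> Qprop r a1 a2 a3 C' N'.
Proof.
move=> HC HN H n Hn e ms L HL hLo hoo h1 h2 h3 /=.
apply: le_trans (H n (leq_trans HN Hn) e ms L HL hLo hoo h1 h2 h3) _.
apply: ler_wpM2r => //; rewrite invr_ge0 exprn_ge0 // /gamma_nr sqrtr_ge0 //.
Qed.

Section NatV.
Variables (R : realType) (n : nat) (e : rel 'I_n) (L : {set 'I_n}).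
Definition NB (f : 'I_n -> R) (B : nat) :=
  exists F : 'I_n -> nat, (forall i, F i <= B)%N /\ forall i, f i = (F i)%:R.

Lemma NB_Tm f B : NB f B -> NB (Tm e L f) (#|L| * B).
Proof.
move=> [F [FB Ff]].
exists (fun j => \sum_(i in L) e i j * F i)%N; split.
  move=> j; rewrite -sum_nat_const; apply: leq_sum => i _.
  by case: (e i j); rewrite ?mul1n ?mul0n.
move=> j; rewrite /P2.Tm natr_sum; apply: eq_bigr => i _.
by rewrite natrM Ff.
Qed.

Lemma NB_SL f B : NB f B -> exists m, (m <= #|L| * B)%N /\ SL L f = m%:R.
Proof.
move=> [F [FB Ff]]; exists (\sum_(i in L) F i)%N; split.
  by rewrite -sum_nat_const; apply: leq_sum => i _.
by rewrite /P2.SL natr_sum; apply: eq_bigr => i _.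
Qed.

Lemma NB_ones : NB (@ones R n) 1.
Proof. by exists (fun _ => 1%N). Qed.
End NatV.

End P5.
Import P5.

Unset Implicit Arguments.
Theorem lemma4p1 (R : realType) (r : nat) (hr : (3 <= r)%N) :
  exists (C : R) (N : nat), forall n : nat, (N <= n)%N ->
  forall e : rel 'I_n, max_spread_Kr_free R r e ->
  forall L : {set 'I_n}, #|L| = (r - 2)%N ->
    (forall u v, u \in L -> v \notin L -> e u v) ->
    (forall u v, u \notin L -> v \notin L -> ~~ e u v) ->
    let g := gamma_nr R n r in
    `| spread R e
       - (2 * g + (r%:R - 2)^-1 *
            (- 3 / (4 * (r%:R - 2)) * (ell1 R e L) ^+ 2 + ell2 R e L) / g) |
      <= C / g ^+ 3.
Proof.
set k := (r - 2)%N.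
set B1 := (k * (k * 1))%N.
set B2 := (k * (k * (k * 1)))%N.
set B3 := (k * (k * (k * (k * 1))))%N.
have step3 : forall a1 a2 : nat, exists (C : R) (N : nat), forall a3, (a3 <= B3)%N ->
    Qprop r a1%:R a2%:R a3%:R C N.
  move=> a1 a2; apply: (@unif R (fun a3 C N => Qprop r a1%:R a2%:R a3%:R C N)).
    by move=> i C C' N N' h1 h2; exact: Qmono.
  by move=> a3 _; exact: per_triple.
have step2 : forall a1 : nat, exists (C : R) (N : nat), forall a2, (a2 <= B2)%N ->
    forall a3, (a3 <= B3)%N -> Qprop r a1%:R a2%:R a3%:R C N.
  move=> a1; apply: (@unif R (fun a2 C N => forall a3, (a3 <= B3)%N -> Qprop r a1%:R a2%:R a3%:R C N)).
    by move=> i C C' N N' h1 h2 H a3 ha3; exact: Qmono h1 h2 (H a3 ha3).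
  by move=> a2 _; exact: step3.
have [C [N H]] : exists (C : R) (N : nat), forall a1, (a1 <= B1)%N -> forall a2, (a2 <= B2)%N ->
    forall a3, (a3 <= B3)%N -> Qprop r a1%:R a2%:R a3%:R C N.
  apply: (@unif R (fun a1 C N => forall a2, (a2 <= B2)%N ->
    forall a3, (a3 <= B3)%N -> Qprop r a1%:R a2%:R a3%:R C N)).
    by move=> i C C' N N' h1 h2 H a2 ha2 a3 ha3; exact: Qmono h1 h2 (H a2 ha2 a3 ha3).
  by move=> a1 _; exact: step2.
exists C, N => n Hn e ms L HL hLo hoo.
have N0 := NB_ones R n.
have N1 := NB_Tm e L N0.
have N2 := NB_Tm e L N1.
have N3 := NB_Tm e L N2.
have [m1 [hm1 E1]] := NB_SL L N1.
have [m2 [hm2 E2]] := NB_SL L N2.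
have [m3 [hm3 E3]] := NB_SL L N3.
rewrite HL -/k in hm1 hm2 hm3.
exact: (H m1 hm1 m2 hm2 m3 hm3 n Hn e ms L HL hLo hoo E1 E2 E3).
Qed.
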